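(* Let $(Y,u)$ and $(Y',u')$ be non-empty ultrametric spaces and let $f:Y\to Y'$ be immediate. If $(Y,u)$ is spherically complete, then $f$ is surjective and $(Y',u')$ is spherically complete. Moreover, for every $y\in Y$ and every ball $B'$ in $Y'$ containing $fy$, there is a ball $B$ in $Y$ containing $y$ such that $f(B)=B'$.
   Context: An ultrametric space $(Y,u)$ is a set $Y$ with a map $u$ from $Y\times Y$ onto a totally ordered set $\Gamma$ with last element $\infty$ such that for all $x,y,z\in Y$: $u(y,z)=\infty$ iff $y=z$; $u(y,z)\ge\min\{u(y,x),u(x,z)\}$; $u(y,z)=u(z,y)$. For $y\in Y$ and $\alpha\in\Gamma$, $B_\alpha(y)=\{z\in Y: u(y,z)\ge\alpha\}$ (closed ball), and $B(x,y):=B_{u(x,y)}(x)$. A ball is a union of a non-empty collection of closed balls which contain a common element. A nest of balls is a set of balls totally ordered by inclusion; $(Y,u)$ is spherically complete if every nest of balls has non-empty intersection. We write $fy$ for $f(y)$. An element $z'\in Y'$ is an attractor for $f$ if for every $y\in Y$ with $z'\ne fy$ there is $z\in Y$ with $u'(fz,z')>u'(fy,z')$ and $f(B(y,z))\subseteq B(fy,z')$. The map $f$ is immediate if every $z'\in Y'$ is an attractor for $f$. *)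

(* Defs.v *)
From mathcomp Require Import all_boot all_order.
Set Implicit Arguments. Unset Strict Implicit. Unset Printing Implicit Defensive.
Import Order.TTheory.
Local Open Scope order_scope.

Section Ultrametric.
Variables (d : Order.disp_t) (G : orderType d).

Definition ultrametric (Y : Type) (inf : G) (u : Y -> Y -> G) : Prop :=
  [/\ (forall g : G, g <= inf),
      (forall g : G, exists x y, u x y = g),
      (forall y z, u y z = inf <-> y = z),
      (forall x y z, Order.min (u y x) (u x z) <= u y z)
    & (forall y z, u y z = u z y)].

Variable (Y : Type) (u : Y -> Y -> G).

Definition cball (a : G) (y : Y) : Y -> Prop := fun z => a <= u y z.

Definition bxy (x y : Y) : Y -> Prop := cball (u x y) x.

Definition is_closed_ball (B : Y -> Prop) : Prop :=
  exists (y : Y) (a : G), forall z, B z <-> cball a y z.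

Definition is_ball (B : Y -> Prop) : Prop :=
  exists C : (Y -> Prop) -> Prop,
    [/\ (exists D, C D),
        (forall D, C D -> is_closed_ball D),
        (exists x, forall D, C D -> D x)
      & (forall z, B z <-> exists D, C D /\ D z)].

Definition subsetY (A B : Y -> Prop) : Prop := forall z, A z -> B z.

Definition spherically_complete : Prop :=
  forall N : (Y -> Prop) -> Prop,
    (forall B, N B -> is_ball B) ->
    (forall B1 B2, N B1 -> N B2 -> subsetY B1 B2 \/ subsetY B2 B1) ->
    exists y, forall B, N B -> B y.

End Ultrametric.

Section Maps.
Variables (d : Order.disp_t) (G : orderType d) (d' : Order.disp_t) (G' : orderType d').
Variables (Y Y' : Type) (u : Y -> Y -> G) (u' : Y' -> Y' -> G') (f : Y -> Y').

Definition is_attractor (z' : Y') : Prop :=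
  forall y : Y, z' <> f y ->
    exists z : Y, u' (f y) z' < u' (f z) z' /\
      (forall x, bxy u y z x -> bxy u' (f y) z' (f x)).

Definition immediate : Prop := forall z' : Y', is_attractor z'.

End Maps.

(* Main.v *)
Require Import Defs.
From mathcomp Require Import all_boot all_order.
From mathcomp Require Import boolp classical_sets.
From Stdlib Require Import Classical.
Import Order.TTheory.
Local Open Scope order_scope.

Section Balls.
Context {d : Order.disp_t} {G : orderType d} {inf : G} {Y : Type} {u : Y -> Y -> G}.
Hypothesis Hu : ultrametric inf u.

Lemma um_top g : g <= inf. Proof. by case: Hu. Qed.
Lemma um_eq y z : u y z = inf <-> y = z. Proof. by case: Hu. Qed.
Lemma um_sym y z : u y z = u z y. Proof. by case: Hu. Qed.
Lemma um_tri {a} x {y z} : a <= u y x -> a <= u x z -> a <= u y z.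
Proof.
case: Hu => _ _ _ H _ h1 h2; apply: le_trans (H x y z).
by rewrite le_min h1 h2.
Qed.
Lemma um_inf y z : inf <= u y z -> y = z.
Proof. move=> h; apply/um_eq; apply/le_anti; by rewrite h um_top. Qed.

Lemma bxy_self y w : bxy u y w w. Proof. exact: le_refl. Qed.
Lemma bxy_ctr y w : bxy u y w y. Proof. rewrite /bxy /cball; have /um_eq -> : y = y by []; exact: um_top. Qed.
Lemma bxy_yy y v : bxy u y y v -> v = y.
Proof. rewrite /bxy /cball; have /um_eq -> : y = y by []; by move/um_inf. Qed.
Lemma bxy_sub y y' x w : bxy u y y' x -> bxy u y x w -> bxy u y y' w.
Proof. exact: le_trans. Qed.

Lemma bxy_trans y1 y2 y3 x : bxy u y1 y3 x -> bxy u y1 y2 x \/ bxy u y2 y3 x.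
Proof.
rewrite /bxy /cball => h.
case: (leP (u y1 y2) (u y1 y3)) => h12; first by left; exact: le_trans h.
right.
have h23 : u y2 y3 <= u y1 y3.
  rewrite leNgt; apply/negP => h'.
  have : u y1 y3 < u y1 y3.
    have h0 : u y1 y3 < Order.min (u y1 y2) (u y2 y3) by rewrite lt_min h12 h'.
    apply: lt_le_trans h0 _; case: Hu => _ _ _ H _; exact: H.
  by rewrite ltxx.
apply: le_trans h23 _.
apply: (um_tri y1); first by rewrite (um_sym y2 y1); exact: ltW.
exact: h.
Qed.

Lemma ball_bxy {B a b} : is_ball u B -> B a -> B b -> forall x, bxy u a b x -> B x.
Proof.
case=> C [_ Ccl [c Cc] HB] /HB [D1 [CD1 D1a]] /HB [D2 [CD2 D2b]] x hx.
apply/HB.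
case: (Ccl _ CD1) => y1 [a1 H1]; case: (Ccl _ CD2) => y2 [a2 H2].
have c1 := (H1 c).1 (Cc _ CD1); have c2 := (H2 c).1 (Cc _ CD2).
have a1' := (H1 a).1 D1a; have b2 := (H2 b).1 D2b.
rewrite /cball in c1 c2 a1' b2.
case: (leP a1 a2) => h.
- exists D1; split => //; apply/H1; rewrite /cball.
  have yb : a1 <= u y1 b.
    apply: (um_tri c) => //; apply: (um_tri y2).
      by rewrite um_sym; exact: le_trans h c2.
    exact: le_trans h b2.
  apply: (um_tri a) => //; apply: le_trans hx.
  apply: (um_tri y1) => //; by rewrite um_sym.
- exists D2; split => //; apply/H2; rewrite /cball.
  have ya : a2 <= u y2 a.
    apply: (um_tri c) => //; apply: (um_tri y1).
      by rewrite um_sym; exact: le_trans (ltW h) c1.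
    exact: le_trans (ltW h) a1'.
  apply: (um_tri a) => //; apply: le_trans hx.
  apply: (um_tri y2) => //; by rewrite um_sym.
Qed.

Lemma ball_nested {B1 B2 p} : is_ball u B1 -> is_ball u B2 -> B1 p -> B2 p ->
  subsetY B1 B2 \/ subsetY B2 B1.
Proof.
move=> hB1 hB2 p1 p2.
case: (classic (subsetY B1 B2)) => h; first by left.
right => b b2.
have [a [a1 na2]] : exists a, B1 a /\ ~ B2 a.
  apply: NNPP => hn; apply: h => a a1; apply: NNPP => na; apply: hn; by exists a.
case: (leP (u p a) (u p b)) => h'.
- exact: (ball_bxy hB1 p1 a1 _ h').
- exfalso; apply: na2; apply: (ball_bxy hB2 p2 b2); rewrite /bxy /cball; exact: ltW.
Qed.


Hypothesis Hsc : spherically_complete u.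
Variables (Q Lt : Y -> Y -> Prop) (good : Y -> Prop).
Hypothesis Qrefl : forall a, Q a a.
Hypothesis LtQ : forall a b c, Lt a b -> Q b c -> Lt a c.
Hypothesis Ltirr : forall a, ~ Lt a a.
Definition Srel a b := Lt a b /\ forall x, bxy u a b x -> Q a x.
Hypothesis Qtrans : forall a b c, Q a b -> Q b c -> Q a c.
Hypothesis step : forall y, ~ good y -> exists z, Srel y z.

Lemma Srel_trans a b c : Srel a b -> Srel b c -> Srel a c.
Proof.
move=> [lab qab] [lbc qbc]; split.
  exact: LtQ lab (qbc _ (bxy_self _ _)).
move=> x /(bxy_trans _ b) [h|h]; first exact: qab.
apply: Qtrans (qab _ (bxy_self _ _)) (qbc _ h).
Qed.

Lemma gen_zorn y0 : exists y, good y /\ forall x, bxy u y0 y x -> Q y0 x.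
Proof.
pose T := {y | y = y0 \/ Srel y0 y}.
pose R := fun a b : T => `[< sval a = sval b \/ Srel (sval a) (sval b) >].
have t0 : T := exist _ y0 (or_introl erefl).
have RP a b : R a b <-> (sval a = sval b \/ Srel (sval a) (sval b)).
  by split => /asboolP.
have [t tmax] : exists t, premaximal (fun a b => R a b) t.
  apply: (@ZL_preorder T t0 R).
  - by move=> a; apply/RP; left.
  - move=> a b c /RP hab /RP hbc; apply/RP.
    case: hab => [->|hab]; first by [].
    case: hbc => [<-|hbc]; [by right | right; exact: Srel_trans hab hbc].
  - move=> A htot.
    case: (classic (exists m, A m /\ forall s, A s -> R s m)) => [[m [Am hm]]|nomax].
      by exists m.
    case: (classic (exists s1, A s1)) => [[s1 As1]|noA]; last first.
      by exists t0 => s As; exfalso; apply: noA; exists s.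
    pose Bs (s : T) := fun z => exists D, (exists s', A s' /\ R s s' /\ D = bxy u (sval s) (sval s')) /\ D z.
    have ballB s : A s -> is_ball u (Bs s).
      move=> As; exists (fun D => exists s', A s' /\ R s s' /\ D = bxy u (sval s) (sval s')); split.
      - exists (bxy u (sval s) (sval s)), s; split => //; split => //; apply/RP; by left.
      - move=> D [s' [_ [_ ->]]]; exists (sval s), (u (sval s) (sval s')) => z; by split.
      - exists (sval s) => D [s' [_ [_ ->]]]; exact: bxy_ctr.
      - by move=> z.
    have inB s s' : A s -> A s' -> R s s' -> Bs s (sval s').
      move=> As As' Rss'; exists (bxy u (sval s) (sval s')); split; last exact: bxy_self.
      by exists s'.
    have [ys hys] : exists y, forall B, (exists s, A s /\ B = Bs s) -> B y.
      apply: Hsc.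
    + by move=> B [s [As ->]]; exact: ballB.
    + move=> B1 B2 [s1' [A1 ->]] [s2 [A2 ->]].
      case: (htot s1' s2 A1 A2) => h.
      * apply: (ball_nested (ballB _ A1) (ballB _ A2) (inB _ _ A1 A2 h)).
        by apply: inB => //; apply/RP; left.
      * apply: (ball_nested (ballB _ A1) (ballB _ A2) (p := sval s1')).
          by apply: inB => //; apply/RP; left.
        exact: inB.
    have K s : A s -> forall x, bxy u (sval s) ys x -> Q (sval s) x.
      move=> As x hx.
      have [D [[s' [As' [/RP Rss' eD]]] Dys]] := hys (Bs s) (ex_intro _ s (conj As erefl)).
      subst D.
      case: Rss' => [e|[_ q]].
        rewrite e in Dys; move/bxy_yy: Dys => Dys.
        rewrite -e in Dys; rewrite Dys in hx; move/bxy_yy: hx => ->; exact: Qrefl.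
      move: hx; rewrite /bxy /cball => hx; apply: q; rewrite /bxy /cball; exact: le_trans Dys hx.
    have L s : A s -> Srel (sval s) ys.
      move=> As.
      have [s'' [As'' nR]] : exists s'', A s'' /\ ~ R s'' s.
        apply: NNPP => hn; apply: nomax; exists s; split => // s'' As''.
        apply: NNPP => hr; apply: hn; by exists s''.
      have Rs : Srel (sval s) (sval s'').
        case: (htot s s'' As As'') => h; last by exfalso; apply: nR.
        case/RP: h => // e; exfalso; apply: nR; apply/RP; by left.
      split; last exact: K.
      exact: LtQ Rs.1 (K _ As'' _ (bxy_self _ _)).
    have pys : ys = y0 \/ Srel y0 ys.
      case: (svalP s1) => e; right; first by rewrite -e; exact: L.
      exact: Srel_trans e (L _ As1).
    exists (exist _ ys pys) => s As; apply/RP; right; exact: L.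
case: (classic (good (sval t))) => hg.
  exists (sval t); split => //.
  case: (svalP t) => [e|[_ q] //] x hx.
  rewrite e in hx; move/bxy_yy: hx => ->; exact: Qrefl.
exfalso.
have [z hz] := step _ hg.
have pz : z = y0 \/ Srel y0 z.
  right; case: (svalP t) => e; first by rewrite -e.
  exact: Srel_trans e hz.
have /RP := tmax (exist _ z pz) ((RP t (exist _ z pz)).2 (or_intror hz)) => /= [[e|h]].
  by move: hz; rewrite e => -[/Ltirr].
by case: (Srel_trans _ _ _ hz h) => /Ltirr.
Qed.

End Balls.

Theorem theorem2 (d : Order.disp_t) (G : orderType d) (inf : G)
  (d' : Order.disp_t) (G' : orderType d') (inf' : G')
  (Y Y' : Type) (u : Y -> Y -> G) (u' : Y' -> Y' -> G') (f : Y -> Y') :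
  ultrametric inf u -> ultrametric inf' u' ->
  inhabited Y -> inhabited Y' ->
  immediate u u' f ->
  spherically_complete u ->
  [/\ (forall y' : Y', exists y : Y, f y = y'),
      spherically_complete u'
    & (forall (y : Y) (B' : Y' -> Prop), is_ball u' B' -> B' (f y) ->
         exists B : Y -> Prop, [/\ is_ball u B, B y &
           forall z', B' z' <-> exists z, B z /\ f z = z'])].
Proof.
move=> Hu Hu' [y00] _ Himm Hsc.
have L y0 z' : exists y, f y = z' /\ forall x, bxy u y0 y x -> u' (f y0) z' <= u' (f x) z'.
  have h1 : forall a, u' (f a) z' <= u' (f a) z' by move=> a; exact: le_refl.
  have h2 : forall a b c, u' (f a) z' < u' (f b) z' -> u' (f b) z' <= u' (f c) z' ->
      u' (f a) z' < u' (f c) z' by move=> a b c; exact: lt_le_trans.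
  have h3 : forall a, ~ (u' (f a) z' < u' (f a) z') by move=> a; rewrite ltxx.
  have h4 : forall a b c, u' (f a) z' <= u' (f b) z' -> u' (f b) z' <= u' (f c) z' ->
      u' (f a) z' <= u' (f c) z' by move=> a b c; exact: le_trans.
  have h5 : forall y, ~ f y = z' -> exists z, Srel (u:=u) (fun a b => u' (f a) z' <= u' (f b) z')
      (fun a b => u' (f a) z' < u' (f b) z') y z.
    move=> y ng; have [z [hlt hsub]] := Himm z' y (fun e => ng (esym e)).
    exists z; split => // x hx; have := hsub x hx; rewrite /bxy /cball => h.
    apply: (um_tri Hu' (f y)); last exact: le_refl.
    by rewrite (um_sym Hu' (f x)).
  exact: (gen_zorn Hu Hsc (fun a b => u' (f a) z' <= u' (f b) z')
    (fun a b => u' (f a) z' < u' (f b) z') (fun a => f a = z') h1 h2 h3 h4 h5 y0).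
split.
- by move=> y'; have [y [e _]] := L y00 y'; exists y.
- move=> N' hball hnest.
  pose Q := fun a b => forall B', N' B' -> B' (f a) -> B' (f b).
  pose Lt := fun a b => exists B', N' B' /\ ~ B' (f a) /\ B' (f b).
  pose good := fun a => forall B', N' B' -> B' (f a).
  have h1 : forall a, Q a a by move=> a.
  have h2 : forall a b c, Lt a b -> Q b c -> Lt a c.
    move=> a b c [B' [NB [na fb]]] q; exists B'; split => //; split => //; exact: q.
  have h3 : forall a, ~ Lt a a by move=> a [B' [_ [n p]]].
  have h4 : forall a b c, Q a b -> Q b c -> Q a c.
    move=> a b c q1 q2 B' NB h; apply: q2 => //; exact: q1.
  have h5 : forall y, ~ good y -> exists z, Srel (u:=u) Q Lt y z.
    move=> y ng.
    have [B0 [N0 nB0]] : exists B0, N' B0 /\ ~ B0 (f y).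
      apply: NNPP => hn; apply: ng => B' NB; apply: NNPP => nb; apply: hn; by exists B'.
    have [x' Bx'] : exists x', B0 x'.
      case: (hball B0 N0) => C [[D CD] _ [c Cc] HB].
      exists c; apply/HB; exists D; split => //; exact: Cc.
    have [w [fw hw]] := L y x'.
    exists w; split.
      by exists B0; split => //; split => //; rewrite fw.
    move=> x hx B' NB' By.
    case: (hnest B' B0 NB' N0) => sub; first by exfalso; apply: nB0; apply: sub.
    have Bx'' := sub _ Bx'.
    apply: (ball_bxy Hu' (hball _ NB') By Bx''); rewrite /bxy /cball.
    apply: (um_tri Hu' x'); first exact: le_refl.
    rewrite (um_sym Hu' x'); exact: hw.
  have [y [gy _]] := gen_zorn Hu Hsc Q Lt good h1 h2 h3 h4 h5 y00.
  by exists (f y).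
- move=> y B' hB' By.
  pose C := fun D => exists w, (forall v, bxy u y w v -> B' (f v)) /\ D = bxy u y w.
  have Cy : C (bxy u y y).
    by exists y; split => // v /(bxy_yy Hu) ->.
  exists (fun z => exists D, C D /\ D z); split.
  + exists C; split.
    * by exists (bxy u y y).
    * move=> D [w [_ ->]]; exists y, (u y w) => z; by split.
    * exists y => D [w [_ ->]]; exact: (bxy_ctr Hu y w).
    * by [].
  + by exists (bxy u y y); split => //; exact: bxy_self.
  + move=> z'; split.
    * move=> Bz; have [w [fw hw]] := L y z'.
      exists w; split => //.
      exists (bxy u y w); split; last exact: bxy_self.
      exists w; split => // v hv.
      apply: (ball_bxy Hu' hB' By Bz); rewrite /bxy /cball.
      apply: (um_tri Hu' z'); first exact: le_refl.
      rewrite (um_sym Hu' z'); exact: hw.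
    * by move=> [z [[D [[w [hw ->]] Dz]] <-]]; exact: hw.
Qed.
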